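(* Let $E\subset\mathbb R^+$. Then $$\mathrm{Dim}_\mathrm{H}E=\inf\ \mathrm{Dim}_\mathrm{H}\Big(\bigcup_{n\ge1}\bigcup_{R\in\mathcal R_n}R\Big),$$ where the infimum is taken over all families $(\mathcal R_n)_{n\ge1}$ such that, for each $n$, $\mathcal R_n$ is a family of intervals with integer endpoints, each of length a (positive integer) multiple of $n^2$, which covers $E\cap\mathcal S_n$.
   Context: $|Q|$ denotes the length of an interval $Q$. Let $\mathcal S_n=[2^{n-1},2^n)$ for $n\ge1$. For $E\subset\mathbb R^+$, $\rho\ge0$ and $n\ge1$, let $$\nu^n_\rho(E)=\inf\Big\{\sum_{i=1}^m\Big(\frac{|Q_i|}{2^n}\Big)^\rho: Q_i\subset\mathcal S_n \text{ non-trivial intervals with integer endpoints},\ E\cap\mathcal S_n\subset\bigcup_{i=1}^m Q_i\Big\},$$ the infimum being over finite families. The macroscopic Hausdorff dimension is $\mathrm{Dim}_\mathrm{H}E=\inf\{\rho\ge0:\sum_{n\ge1}\nu^n_\rho(E)<\infty\}$. *)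

(* Defs.v *)
From HB Require Import structures.
From mathcomp Require Import all_boot all_order all_algebra.
From mathcomp Require Import all_classical all_reals all_analysis.
Set Implicit Arguments. Unset Strict Implicit. Unset Printing Implicit Defensive.
Import Order.TTheory GRing.Theory Num.Theory.
Local Open Scope classical_set_scope.
Local Open Scope ring_scope.

Section MacroDim.
Variable R : realType.

Definition Sn (n : nat) : set R :=
  [set x : R | (2%:R ^+ n.-1 <= x) && (x < 2%:R ^+ n)].

Definition int_interval (Q : set R) (a b : int) : Prop :=
  (a < b)%R /\
  (Q = [set x : R | (a%:~R <= x) && (x <= b%:~R)] \/
   Q = [set x : R | (a%:~R < x) && (x < b%:~R)] \/
   Q = [set x : R | (a%:~R <= x) && (x < b%:~R)] \/
   Q = [set x : R | (a%:~R < x) && (x <= b%:~R)]).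

Definition nu (n : nat) (rho : R) (E : set R) : R :=
  inf [set s : R | exists (m : nat) (a b : nat -> int) (Q : nat -> set R),
        (forall i, (i < m)%N -> int_interval (Q i) (a i) (b i) /\ Q i `<=` Sn n) /\
        E `&` Sn n `<=` \bigcup_(i in [set i | (i < m)%N]) Q i /\
        s = \sum_(i < m) (((b i - a i)%:~R / 2%:R ^+ n) `^ rho)].

Definition DimH (E : set R) : R :=
  inf [set rho : R | 0 <= rho /\
        (\sum_(1 <= n <oo) (nu n rho E)%:E < +oo)%E].

End MacroDim.

(* Main.v *)
Require Import Defs.
From HB Require Import structures.
From mathcomp Require Import all_boot all_order all_algebra.
From mathcomp Require Import all_classical all_reals all_analysis.
From mathcomp Require Import ring lra zify.
Set Implicit Arguments. Unset Strict Implicit. Unset Printing Implicit Defensive.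
Import Order.TTheory GRing.Theory Num.Theory.
Local Open Scope classical_set_scope.
Local Open Scope ring_scope.
Lemma kfacts (L n : nat) : (1 <= n)%N ->
  (L < (L %/ n ^ 2).+1 * n ^ 2)%N /\ ((L %/ n ^ 2).+1 * n ^ 2 <= L + n ^ 2)%N.
Proof.
move=> n1; have d0 : (0 < n ^ 2)%N by rewrite expn_gt0; lia.
split; first exact: ltn_ceil.
by rewrite mulSn addnC leq_add2r leq_trunc_div.
Qed.

Lemma sq_le_pow n : (4 <= n)%N -> (n ^ 2 <= 2 ^ n)%N.
Proof.
elim: n => // n IH; rewrite leq_eqVlt => /orP[/eqP <- //|n4].
have := IH n4; rewrite -!mulnn expnS; nia.
Qed.

Lemma small_levels n m : (6 <= m)%N -> (n + 2 <= m)%N -> (2 ^ n + n ^ 2 <= 2 ^ m.-1)%N.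
Proof.
move=> m6 nm.
have [n4|n4] := leqP 4 n.
  have h := @sq_le_pow n n4.
  have : (2 ^ n.+1 <= 2 ^ m.-1)%N by rewrite leq_pexp2l //; lia.
  rewrite expnS; lia.
have h1 : (2 ^ 5 <= 2 ^ m.-1)%N by rewrite leq_pexp2l //; lia.
have h2 : (2 ^ n <= 2 ^ 3)%N by rewrite leq_pexp2l //; lia.
have h3 : (n ^ 2 <= 3 ^ 2)%N by rewrite leq_exp2r //; lia.
move: h1 h2 h3; rewrite !expnS !expn0 /=; lia.
Qed.

Lemma spill_fit m : (6 <= m)%N -> (1 <= m.-1 ^ 2)%N /\ (2 ^ m.-1 + m.-1 ^ 2 <= 2 ^ m)%N.
Proof.
case: m => // m m6 /=.
have h : (m ^ 2 <= 2 ^ m)%N by apply: sq_le_pow; lia.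
split; first by rewrite -mulnn; nia.
by rewrite [(2 ^ m.+1)%N]expnS; lia.
Qed.
Section S.
Variable R : realType.

Lemma p2E n : (((2 ^ n)%N)%:Z)%:~R = (2%:R ^+ n : R).
Proof. by rewrite pmulrn -natrX. Qed.

Lemma ii_bounds (Q : set R) a b x : int_interval Q a b -> Q x ->
  a%:~R <= x /\ x <= b%:~R.
Proof.
case=> _ [->|[->|[->|->]]] /= /andP[h1 h2]; split=> //; exact: ltW.
Qed.

Lemma ii_mid (Q : set R) a b : int_interval Q a b ->
  Q (a%:~R + 2^-1) /\ Q (b%:~R - 2^-1).
Proof.
case=> ab hQ.
have h1 : (a + 1)%:~R <= b%:~R :> R by rewrite ler_int; lia.
rewrite intrD in h1.
set t : R := a%:~R in h1 *; set u : R := b%:~R in h1 *.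
have c1 : t < t + 2^-1 by lra.
have c2 : t + 2^-1 < u by lra.
have c3 : t < u - 2^-1 by lra.
have c4 : u - 2^-1 < u by lra.
by case: hQ => [->|[->|[->|->]]]; split; rewrite /= ?c1 ?c2 ?c3 ?c4 ?ltW.
Qed.

Lemma ii_end (Q : set R) a b n : int_interval Q a b -> Q `<=` @Sn R n ->
  ((2 ^ n.-1)%N%:Z <= a)%R /\ (b <= (2 ^ n)%N%:Z)%R.
Proof.
move=> hQ sQ; have [m1 m2] := ii_mid hQ.
move: (sQ _ m1) (sQ _ m2); rewrite /Sn /= => /andP[h1 h2] /andP[h3 h4].
split.
  rewrite leNgt; apply/negP => ha.
  have : (a + 1)%:~R <= ((2 ^ n.-1)%N%:Z)%:~R :> R by rewrite ler_int; lia.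
  rewrite intrD p2E; lra.
rewrite leNgt; apply/negP => hb.
have : ((2 ^ n)%N%:Z + 1)%:~R <= b%:~R :> R by rewrite ler_int; lia.
rewrite intrD p2E; lra.
Qed.

Definition cost n (rho : R) m (a b : nat -> int) :=
  \sum_(i < m) (((b i - a i)%:~R / 2%:R ^+ n) `^ rho).

Definition iscover n (E : set R) m (a b : nat -> int) (Q : nat -> set R) :=
  (forall i, (i < m)%N -> int_interval (Q i) (a i) (b i) /\ Q i `<=` @Sn R n) /\
  E `&` @Sn R n `<=` \bigcup_(i in [set i | (i < m)%N]) Q i.

Lemma nuE n (rho : R) (E : set R) : nu n rho E = inf [set s | exists m a b Q,
   iscover n E m a b Q /\ s = cost n rho m a b].
Proof.
rewrite /nu; congr inf; apply/funext => s; apply/propext; split.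
  by case=> m [a [b [Q [h1 [h2 ->]]]]]; exists m, a, b, Q.
by case=> m [a [b [Q [[h1 h2] ->]]]]; exists m, a, b, Q.
Qed.

Lemma cost_ge0 n rho m a b : 0 <= cost n rho m a b.
Proof. by rewrite /cost sumr_ge0 // => i _; rewrite powR_ge0. Qed.

Lemma nu_lb n (rho : R) (E : set R) : has_lbound [set s | exists m a b Q,
   iscover n E m a b Q /\ s = cost n rho m a b].
Proof. by exists 0 => s [m [a [b [Q [_ ->]]]]]; exact: cost_ge0. Qed.

Lemma nu_ge0 n (rho : R) (E : set R) : 0 <= nu n rho E.
Proof.
rewrite nuE; set S := [set s | _].
have [ne|e] := pselect (S !=set0).
  by apply: lb_le_inf => // s [m [a [b [Q [_ ->]]]]]; exact: cost_ge0.
suff -> : S = set0 by rewrite inf0.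
by apply/seteqP; split => // s Ss; apply: e; exists s.
Qed.

Lemma nu_le n (rho : R) (E : set R) m a b Q : iscover n E m a b Q -> nu n rho E <= cost n rho m a b.
Proof.
move=> hc; rewrite nuE; apply: ge_inf; first exact: nu_lb.
by exists m, a, b, Q.
Qed.

Lemma Sn_ii n : (1 <= n)%N ->
  int_interval (@Sn R n) (2 ^ n.-1)%N%:Z (2 ^ n)%N%:Z.
Proof.
move=> n1; split.
  by rewrite ltz_nat ltn_exp2l // prednK // ltnSn.
by right; right; left; rewrite /Sn !p2E.
Qed.

Lemma nu_ne n (rho : R) (E : set R) : (1 <= n)%N -> [set s | exists m a b Q,
   iscover n E m a b Q /\ s = cost n rho m a b] !=set0.
Proof.
move=> n1; exists (cost n rho 1 (fun=> (2 ^ n.-1)%N%:Z) (fun=> (2 ^ n)%N%:Z)).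
exists 1%N, (fun=> (2 ^ n.-1)%N%:Z), (fun=> (2 ^ n)%N%:Z), (fun=> @Sn R n).
split => //; split.
  by move=> i _; split => //; exact: Sn_ii.
by move=> x [_ Sx]; exists 0%N.
Qed.

Lemma nu_approx n (rho : R) (E : set R) eps : (1 <= n)%N -> 0 < eps ->
  exists m a b Q, iscover n E m a b Q /\ cost n rho m a b < nu n rho E + eps.
Proof.
move=> n1 e0.
have := @inf_lt _ _ (nu n rho E + eps) (nu_ne rho E n1).
rewrite -nuE ltrDl => /(_ e0) [s [m [a [b [Q [hc ->]]]]] hs].
by exists m, a, b, Q.
Qed.

Lemma nu_mono n (rho : R) (E F : set R) : (1 <= n)%N -> E `&` @Sn R n `<=` F `&` @Sn R n ->
  nu n rho E <= nu n rho F.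
Proof.
move=> n1 EF; rewrite [nu n rho F]nuE; apply: lb_le_inf; first exact: nu_ne.
move=> s [m [a [b [Q [[h1 h2] ->]]]]]; apply: (@nu_le n rho E m a b Q); split => //.
by move=> x Ex; apply: h2; apply: EF.
Qed.

Lemma pow_le1 (x r : R) : 0 <= x <= 1 -> 0 <= r -> x `^ r <= 1.
Proof.
move=> /andP[x0 x1] r0; have [->|xn0] := eqVneq x 0.
  by rewrite /powR eqxx; case: (r == 0).
rewrite -(powRr0 x); apply: ger_powR => //.
by rewrite x1 andbT lt_neqAle eq_sym xn0.
Qed.

Lemma nu_le1 n (rho : R) (E : set R) : (1 <= n)%N -> 0 <= rho -> nu n rho E <= 1.
Proof.
move=> n1 r0.
apply: (le_trans (nu_le rho (m := 1%N) (a := fun=> (2 ^ n.-1)%N%:Z)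
    (b := fun=> (2 ^ n)%N%:Z) (Q := fun=> @Sn R n) _)).
  split; first by move=> i _; split => //; exact: Sn_ii.
  by move=> x [_ Sx]; exists 0%N.
rewrite /cost big_ord1 pow_le1 // intrB !p2E.
have h0 : (0:R) < 2%:R ^+ n by rewrite exprn_gt0.
have h1 : (0:R) <= 2%:R ^+ n.-1 by rewrite exprn_ge0.
have h2 : (2%:R ^+ n.-1 : R) <= 2%:R ^+ n.
  by rewrite ler_eXn2l ?ltr1n ?leq_pred.
apply/andP; split; first by rewrite divr_ge0 ?subr_ge0 // ltW.
by rewrite ler_pdivrMr // mul1r; lra.
Qed.

Lemma geo_partial (q : R) N : 0 <= q < 1 ->
  \sum_(1 <= i < N) q ^+ i <= (1 - q)^-1.
Proof.
move=> /andP[q0 q1].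
have h : forall N, \sum_(0 <= i < N) q ^+ i * (1 - q) = 1 - q ^+ N.
  elim=> [|n IH]; first by rewrite big_geq // expr0 subrr.
  by rewrite big_nat_recr //= IH exprS; ring.
have sq : 0 < 1 - q by rewrite subr_gt0.
case: N => [|N]; first by rewrite big_geq // invr_ge0 ltW.
rewrite -[(1 - q)^-1]mul1r ler_pdivlMr // big_distrl /=.
apply: (le_trans _ (_ : \sum_(0 <= i < N.+1) q ^+ i * (1 - q) <= 1)).
  rewrite [X in _ <= X](big_ltn) //= expr0 lerDr.
  by rewrite mul1r ltW.
by rewrite h gerBl exprn_ge0.
Qed.

Local Open Scope ereal_scope.
Lemma sum_fin (u : nat -> R) (B : R) : (forall n, (0 <= u n)%R) ->
  (forall N, (\sum_(1 <= i < N) u i <= B)%R) ->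
  \sum_(1 <= n <oo) (u n)%:E < +oo.
Proof.
move=> u0 uB.
apply: (@le_lt_trans _ _ B%:E); last exact: ltry.
apply: lime_le.
  by apply: is_cvg_nneseries => n _ _; rewrite lee_fin.
by apply: nearW => N; rewrite sumEFin lee_fin.
Qed.

Lemma geo_fin (c q : R) : (0 <= c)%R -> (0 <= q < 1)%R ->
  \sum_(1 <= n <oo) (c * q ^+ n)%:E < +oo.
Proof.
move=> c0 /andP[q0 q1]; apply: (@sum_fin _ (c * (1 - q)^-1)).
  by move=> n; rewrite mulr_ge0 // exprn_ge0.
move=> N; rewrite -mulr_sumr ler_wpM2l //; apply: geo_partial.
by rewrite q0 q1.
Qed.

Lemma cmp_fin (g f h : nat -> R) (C : R) : (0 <= C)%R ->
  (forall n, (0 <= f n)%R) -> (forall n, (0 <= h n)%R) ->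
  (forall n, (1 <= n)%N -> (0 <= g n /\ g n <= C * f n + h n)%R) ->
  \sum_(1 <= n <oo) (f n)%:E < +oo ->
  \sum_(1 <= n <oo) (h n)%:E < +oo ->
  \sum_(1 <= n <oo) (g n)%:E < +oo.
Proof.
move=> C0 f0 h0 gb sf sh.
pose g' n := if (1 <= n)%N then g n else 0%R.
have -> : \sum_(1 <= n <oo) (g n)%:E = \sum_(1 <= n <oo) (g' n)%:E.
  apply: congr_lim; apply/funext => N; apply: eq_big_nat => i /andP[i1 _].
  by rewrite /g' i1.
apply: (@le_lt_trans _ _ (\sum_(1 <= n <oo) ((C * f n)%:E + (h n)%:E))).
  apply: (@lee_nneseries _ _ _ xpredT 1%N).
    by move=> i i1 _; rewrite /g' i1 lee_fin; case: (gb i i1).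
  move=> n _; rewrite /g' -EFinD lee_fin; case: ifP => n1.
    by case: (gb n n1).
  by rewrite addr_ge0 // mulr_ge0.
rewrite (@nneseriesD _ _ _ xpredT 1%N); last 2 first.
- by move=> i _ _; rewrite lee_fin mulr_ge0.
- by move=> i _ _; rewrite lee_fin.
have -> : \sum_(1 <= n <oo) (C * f n)%:E = C%:E * \sum_(1 <= n <oo) (f n)%:E.
  rewrite -(@nneseriesZl _ _ xpredT) //; last by move=> i _; rewrite lee_fin.
apply: lte_add_pinfty => //.
by apply: lte_mul_pinfty => //; rewrite lee_fin.
Qed.

Lemma Jfacts n (Q : set R) a b : (1 <= n)%N -> int_interval Q a b -> Q `<=` @Sn R n ->
  [/\ ((2 ^ n.-1)%N%:Z <= a)%R, (b <= (2 ^ n)%N%:Z)%R, (a < b)%R,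
      (b < a + (((`|b - a|%N %/ n ^ 2).+1 * n ^ 2)%N)%:Z)%R &
      (a + (((`|b - a|%N %/ n ^ 2).+1 * n ^ 2)%N)%:Z <= b + (n ^ 2)%N%:Z)%R].
Proof.
move=> n1 hQ sQ; have [e1 e2] := ii_end hQ sQ.
have ab := hQ.1.
have [k1 k2] := @kfacts `|b - a|%N n n1.
split => //; lia.
Qed.
Local Close Scope ereal_scope.
Lemma DimH_le (X : set R) (rho : R) : 0 <= rho ->
  (\sum_(1 <= n <oo) (nu n rho X)%:E < +oo)%E -> DimH X <= rho.
Proof.
move=> r0 hs; apply: ge_inf; last by split.
by exists 0 => r [].
Qed.

Lemma geo_fin1 (q : R) : 0 <= q < 1 ->
  (\sum_(1 <= n <oo) (q ^+ n)%:E < +oo)%E.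
Proof.
move=> /andP[q0 q1]; apply: (@sum_fin _ ((1 - q)^-1)).
  by move=> n; rewrite exprn_ge0.
by move=> N; apply: geo_partial; rewrite q0 q1.
Qed.

Lemma zero_fin : (\sum_(1 <= n <oo) (0:R)%:E < +oo)%E.
Proof. by apply: (@sum_fin _ 0) => // N; rewrite big1. Qed.

Lemma dim_ne (X : set R) : [set rho : R | 0 <= rho /\
        (\sum_(1 <= n <oo) (nu n rho X)%:E < +oo)%E] !=set0.
Proof.
exists 2; split => //.
apply: (@cmp_fin _ (fun n => 2^-1 ^+ n) (fun=> 0) 1) => //; last first.
- exact: zero_fin.
- by apply: geo_fin1; rewrite invr_ge0 ler0n /= invf_lt1 // ltr1n.
move=> n n1; split; first exact: nu_ge0.
rewrite addr0 mul1r.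
pose h := (2 ^ n.-1)%N.
have hn : (2 ^ n)%N = (2 * h)%N by rewrite /h -expnS prednK.
apply: (le_trans (@nu_le n 2 X h (fun i => (h + i)%N%:Z) (fun i => (h + i).+1%N%:Z)
   (fun i => [set x : R | ((h + i)%N%:Z%:~R <= x) && (x < (h + i).+1%N%:Z%:~R)]) _)).
  split.
    move=> i ih; split; first by split; [rewrite ltz_nat | right; right; left].
    move=> x /= /andP[h1 h2]; rewrite /Sn /= -!p2E; apply/andP; split.
      by apply: (le_trans _ h1); rewrite ler_int lez_nat leq_addr.
    by apply: (lt_le_trans h2); rewrite ler_int lez_nat hn; lia.
  move=> x [_ /andP[x1 x2]].
  have hz1 : (h%:Z <= Num.floor x)%R by rewrite floor_ge_int p2E.
  have hz2 : (Num.floor x < (2 * h)%N%:Z)%R by rewrite floor_lt_int -hn p2E.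
  exists `|Num.floor x - h%:Z|%N; first by rewrite /=; lia.
  rewrite /=; have -> : ((h + `|Num.floor x - h%:Z|)%N%:Z) = Num.floor x by lia.
  have -> : ((h + `|Num.floor x - h%:Z|).+1%N%:Z) = Num.floor x + 1 by lia.
  by rewrite floor_le floorD1_gt.
rewrite /cost.
have e : forall i : 'I_h, ((((h + i).+1)%N%:Z - (h + i)%N%:Z)%:~R / 2%:R ^+ n) `^ 2
    = ((2%:R ^+ n)^-1) ^+ 2 :> R.
  move=> i; rewrite (_ : (_ - _)%R = 1); last by lia.
  by rewrite mul1r powR_mulrn // invr_ge0 exprn_ge0.
rewrite (eq_bigr _ (fun i _ => e i)) sumr_const card_ord -[_ *+ h]mulr_natr.
have hy : (h%:R : R) <= 2%:R ^+ n by rewrite -natrX ler_nat /h leq_pexp2l // leq_pred.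
have y0 : (0 : R) < 2%:R ^+ n by rewrite exprn_gt0.
have -> : (2^-1 : R) ^+ n = (2%:R ^+ n)^-1 by rewrite exprVn.
move: hy y0; set y : R := 2%:R ^+ n => hy y0.
apply: (@le_trans _ _ ((y^-1) ^+ 2 * y)).
  by rewrite ler_wpM2l // exprn_ge0 // invr_ge0 ltW.
by rewrite expr2 -mulrA mulVf ?gt_eqF // mulr1.
Qed.

Lemma DimH_mono (E F : set R) :
  (forall n, (1 <= n)%N -> E `&` @Sn R n `<=` F `&` @Sn R n) ->
  DimH E <= DimH F.
Proof.
move=> EF; apply: lb_le_inf; first exact: dim_ne.
move=> rho [r0 hs]; apply: DimH_le => //.
apply: (@cmp_fin _ (fun n => nu n rho F) (fun=> 0) 1) => //.
- by move=> n; exact: nu_ge0.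
- move=> n n1; split; first exact: nu_ge0.
  by rewrite addr0 mul1r; apply: nu_mono => //; exact: EF.
- exact: zero_fin.
Qed.

Lemma powR_gt1 (u c : R) : 1 < u -> 0 < c -> 1 < u `^ c.
Proof.
move=> u1 c0; rewrite /powR gt_eqF ?(lt_trans ltr01) // expR_gt1.
by rewrite mulr_gt0 // ln_gt0.
Qed.

Lemma powR_exprn (a t : R) k : 0 <= a -> (a ^+ k) `^ t = (a `^ t) ^+ k.
Proof.
move=> a0; rewrite -powR_mulrn // powRAC powR_mulrn //; exact: powR_ge0.
Qed.

Lemma powR_inv (a t : R) : 0 < a -> (a^-1) `^ t = (a `^ t)^-1.
Proof.
move=> a0.
have h : a `^ t * (a^-1) `^ t = 1.
  by rewrite -powRM ?invr_ge0 ?ltW // mulfV ?gt_eqF // powR1.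
have hp : 0 < a `^ t by rewrite powR_gt0.
by rewrite -[LHS]mul1r -(mulVf (lt0r_neq0 hp)) -mulrA h mulr1.
Qed.

Lemma bernoulli (h : R) m : 0 <= h -> 1 + m%:R * h <= (1 + h) ^+ m.
Proof.
move=> h0; elim: m => [|m IH]; first by rewrite mul0r addr0 expr0.
rewrite exprS; apply: (le_trans _ (ler_wpM2l _ IH)); last by rewrite addr_ge0.
rewrite -natr1; have : 0 <= m%:R * h * h by rewrite mulr_ge0 // mulr_ge0.
nra.
Qed.

Lemma poly_exp (rho delta : R) : 0 <= rho -> 0 < delta ->
  exists C w, 0 <= C /\ 0 <= w < 1 /\
   forall m : nat, ((2 * (m%:R)^+2) / 2%:R^+m) `^ (rho + delta)
      <= C * w ^+ m * ((2%:R ^+ m)^-1) `^ rho.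
Proof.
move=> r0 d0; set r' := rho + delta.
have r'0 : 0 < r' by rewrite /r'; lra.
set u := (2 : R) `^ (delta / 2).
have u1 : 1 < u by apply: powR_gt1; [rewrite ltr1n | lra].
have u0 : 0 < u by lra.
set q := u `^ (2 * r')^-1.
have q1 : 1 < q by apply: powR_gt1; rewrite // invr_gt0; lra.
have q0 : 0 < q by lra.
have qu : (q ^+ 2) `^ r' = u.
  rewrite -powR_mulrn ?ltW // -powRrM /q -powRrM.
  by rewrite mulVf ?powRr1 ?ltW // mulf_neq0 // lt0r_neq0.
set K := 2 / (q - 1) ^+ 2.
have K0 : 0 <= K by rewrite divr_ge0 // exprn_ge0 //; lra.
exists (K `^ r'), u^-1; split; first exact: powR_ge0.
split.
  by rewrite invr_ge0 ltW //= invf_lt1.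
move=> m.
have hm : m%:R * (q - 1) <= q ^+ m.
  have hq : 0 <= q - 1 by rewrite subr_ge0 ltW.
  have hb := bernoulli m hq.
  have e : 1 + (q - 1) = q by ring.
  rewrite e in hb; apply: le_trans hb; rewrite lerDr //.
have hm0 : 0 <= m%:R * (q - 1) by rewrite mulr_ge0 // subr_ge0 ltW.
have h2 : 2 * m%:R ^+ 2 <= K * (q ^+ 2) ^+ m.
  have hq : 0 < (q - 1) ^+ 2 by rewrite exprn_gt0 // subr_gt0.
  rewrite /K mulrAC ler_pdivlMr // -mulrA ler_wpM2l // -exprMn -exprM mulnC exprM.
  by rewrite !expr2; nra.
have y0 : (0 : R) < 2%:R ^+ m by rewrite exprn_gt0.
have x0 : (0 : R) <= 2 * m%:R ^+ 2 by rewrite mulr_ge0 // exprn_ge0.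
rewrite powRM // ?invr_ge0 ?exprn_ge0 //.
have e1 : ((2%:R ^+ m)^-1) `^ r' = ((2%:R ^+ m)^-1) `^ rho * (u ^+ m)^-2.
  rewrite /r' powRD; last by rewrite invr_eq0 gt_eqF // implybT.
  congr (_ * _); rewrite powR_inv // powR_exprn; last by rewrite ler0n.
  have -> : (2 : R) `^ delta = u ^+ 2.
    rewrite /u expr2 -powRD; first by rewrite -splitr.
    by rewrite pnatr_eq0 implybT.
  by rewrite -exprM mulnC exprM.
have e2 : (K * (q ^+ 2) ^+ m) `^ r' = K `^ r' * u ^+ m.
  by rewrite powRM // ?exprn_ge0 ?ltW // powR_exprn ?exprn_ge0 ?ltW // qu.
rewrite e1; set A := (_ `^ rho).
have hA : 0 <= A / u ^+ m ^+ 2 by rewrite divr_ge0 ?powR_ge0 ?exprn_ge0 // ltW.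
have hp : (2 * m%:R ^+ 2) `^ r' <= (K * (q ^+ 2) ^+ m) `^ r'.
  by apply: ge0_ler_powR; rewrite ?nnegrE ?(ltW r'0) // mulr_ge0 // !exprn_ge0 // ltW.
apply: (le_trans (ler_wpM2r hA hp)); rewrite e2.
have un : u ^+ m != 0 by rewrite expf_neq0 // gt_eqF.
rewrite exprVn le_eqVlt; apply/orP; left; apply/eqP; field.
exact: un.
Qed.

Lemma term_bound (rho delta C w : R) m (L l : int) : 0 <= rho -> 0 < delta ->
  0 <= C -> 0 <= w <= 1 ->
  ((2 * (m%:R)^+2) / 2%:R^+m) `^ (rho + delta)
      <= C * w ^+ m * ((2%:R ^+ m)^-1) `^ rho ->
  (1 <= L)%R -> (1 <= l)%R -> (l <= L + (m ^ 2)%N%:Z)%R -> (l <= (2 ^ m)%N%:Z)%R ->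
  (l%:~R / 2%:R ^+ m) `^ (rho + delta) <= (2 `^ rho + C) * ((L%:~R / 2%:R ^+ m) `^ rho).
Proof.
move=> r0 d0 C0 /andP[w0 w1] hpe L1 l1 lL l2.
have y0 : (0 : R) < 2%:R ^+ m by rewrite exprn_gt0.
have lr0 : (0 : R) < l%:~R by rewrite ltr0z; lia.
have Lr1 : (1 : R) <= L%:~R by rewrite ler1z.
have pL0 : 0 <= (L%:~R / 2%:R ^+ m) `^ rho :> R by exact: powR_ge0.
rewrite mulrDl.
have [Lm|Lm] := leP ((m ^ 2)%N%:Z) L.
  apply: ler_wpDr; first by rewrite mulr_ge0.
  have l2L : (l <= 2 * L)%R by lia.
  have q0 : 0 < l%:~R / 2%:R ^+ m :> R by rewrite divr_gt0.
  have q1 : l%:~R / 2%:R ^+ m <= 1 :> R.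
    by rewrite ler_pdivrMr // mul1r -p2E ler_int.
  have hle : rho <= rho + delta by lra.
  have hq : 0 < (l%:~R / 2%:R ^+ m : R) <= 1 by rewrite q0 q1.
  apply: (le_trans (ger_powR hq hle)).
  have hL0 : (0:R) <= L%:~R / 2%:R ^+ m.
    by apply: divr_ge0; [exact: (le_trans ler01 Lr1) | exact: ltW].
  rewrite -(@powRM R 2 (L%:~R / 2%:R ^+ m) rho) ?ler0n //.
  have ha : (l%:~R / 2%:R ^+ m : R) \in Num.nneg by rewrite nnegrE ltW.
  have hb : (2 * (L%:~R / 2%:R ^+ m) : R) \in Num.nneg by rewrite nnegrE mulr_ge0.
  apply: (ge0_ler_powR r0 ha hb).
  have : (l%:~R : R) <= (2 * L)%:~R by rewrite ler_int.
  by rewrite intrM => h; rewrite mulrA ler_pM2r ?invr_gt0.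
apply: ler_wpDl; first by rewrite mulr_ge0 // powR_ge0.
have l2m : (l <= 2 * (m ^ 2)%N%:Z)%R by lia.
have hr : 0 <= rho + delta by lra.
have hx0 : (l%:~R / 2%:R^+m : R) \in Num.nneg by rewrite nnegrE divr_ge0 // ltW.
have hy0 : ((2 * (m%:R)^+2) / 2%:R^+m : R) \in Num.nneg.
  by rewrite nnegrE divr_ge0 // ?mulr_ge0 ?exprn_ge0 // ltW.
have hx : (l%:~R / 2%:R^+m : R) <= (2 * (m%:R)^+2) / 2%:R^+m.
  rewrite ler_pM2r ?invr_gt0 //.
  have : (l%:~R : R) <= (2 * (m ^ 2)%N%:Z)%:~R by rewrite ler_int.
  by rewrite intrM -natrX.
apply: (le_trans (ge0_ler_powR hr hx0 hy0 hx)).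
apply: (le_trans hpe); rewrite -mulrA ler_wpM2l //.
have wm : w ^+ m <= 1 by rewrite exprn_ile1.
apply: (le_trans (ler_wpM2r (powR_ge0 _ _) wm)); rewrite mul1r.
have ha : ((2%:R ^+ m)^-1 : R) \in Num.nneg by rewrite nnegrE invr_ge0 ltW.
have hb : (L%:~R / 2%:R ^+ m : R) \in Num.nneg.
  by rewrite nnegrE; apply: divr_ge0; [exact: (le_trans ler01 Lr1) | exact: ltW].
have hab : ((2%:R ^+ m)^-1 : R) <= L%:~R / 2%:R ^+ m.
  by rewrite -[X in X <= _]mul1r ler_pM2r ?invr_gt0.
exact: (ge0_ler_powR r0 ha hb hab).
Qed.
End S.

Section M.
Variable R : realType.

Lemma lt_cast_trans (x : R) (p q : int) : x < p%:~R -> (p <= q)%R -> x < q%:~R.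
Proof. by move=> h pq; apply: (lt_le_trans h); rewrite ler_int. Qed.

Lemma le_cast_trans (x : R) (p q : int) : p%:~R <= x -> (q <= p)%R -> q%:~R <= x.
Proof. by move=> h pq; apply: (le_trans _ h); rewrite ler_int. Qed.

Lemma cast_contra (x : R) (p q : int) : p%:~R <= x -> x < q%:~R -> (q <= p)%R -> False.
Proof.
move=> h1 h2 qp; have := le_lt_trans h1 h2; rewrite ltr_int => pq.
by have := lt_le_trans pq qp; rewrite ltxx.
Qed.

Lemma geo2_fin (c1 q1 c2 q2 : R) : 0 <= c1 -> 0 <= q1 < 1 -> 0 <= c2 -> 0 <= q2 < 1 ->
  (\sum_(1 <= n <oo) (c1 * q1 ^+ n + c2 * q2 ^+ n)%:E < +oo)%E.
Proof.
move=> c10 hq1 c20 hq2.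
case/andP: (hq1) => q10 _; case/andP: (hq2) => q20 _.
have -> : (\sum_(1 <= n <oo) (c1 * q1 ^+ n + c2 * q2 ^+ n)%:E =
   \sum_(1 <= n <oo) ((c1 * q1 ^+ n)%:E + (c2 * q2 ^+ n)%:E))%E.
  by apply: congr_lim; apply/funext => N; apply: eq_bigr => i _; rewrite EFinD.
rewrite (@nneseriesD _ _ _ xpredT 1%N).
- by apply: lte_add_pinfty; apply: geo_fin.
- by move=> i _ _; rewrite lee_fin mulr_ge0 // exprn_ge0.
- by move=> i _ _; rewrite lee_fin mulr_ge0 // exprn_ge0.
Qed.


Lemma arith1 (a b : int) (K n m : nat) : n = m.-1 -> (b <= (2 ^ n)%N%:Z)%R ->
  (a + K%:Z <= b + (n ^ 2)%N%:Z)%R -> (a + K%:Z <= (2 ^ m.-1 + m.-1 ^ 2)%N%:Z)%R.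
Proof. move=> -> h1 h2; lia. Qed.

Lemma arith_lt n m : (n < m)%N -> n != m.-1 -> (n + 2 <= m)%N.
Proof. move=> h /eqP h2; case: m h h2 => //= m h h2; lia. Qed.

Lemma arith2 (a b : int) (K n m : nat) : (6 <= m)%N -> (n + 2 <= m)%N ->
  (b <= (2 ^ n)%N%:Z)%R -> (a + K%:Z <= b + (n ^ 2)%N%:Z)%R ->
  (a + K%:Z <= (2 ^ m.-1)%N%:Z)%R.
Proof. move=> m6 nm h1 h2; have := small_levels m6 nm; lia. Qed.

Lemma arith3 (a : int) n m : (m < n)%N -> ((2 ^ n.-1)%N%:Z <= a)%R -> ((2 ^ m)%N%:Z <= a)%R.
Proof.
move=> mn h; have : (2 ^ m <= 2 ^ n.-1)%N by rewrite leq_pexp2l //; case: n mn h => //= n; lia.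
lia.
Qed.

Lemma cover_level (U : set R) (rho delta C w : R) m M (a b : nat -> int) (K : nat -> nat) :
  0 <= rho -> 0 < delta -> 0 <= C -> 0 <= w <= 1 ->
  ((2 * (m%:R)^+2) / 2%:R^+m) `^ (rho + delta) <= C * w ^+ m * ((2%:R ^+ m)^-1) `^ rho ->
  (6 <= m)%N ->
  (forall i, (i < M)%N -> [/\ ((2 ^ m.-1)%N%:Z <= a i)%R, (b i <= (2 ^ m)%N%:Z)%R,
      (a i < b i)%R, (b i < a i + (K i)%:Z)%R & (a i + (K i)%:Z <= b i + (m ^ 2)%N%:Z)%R]) ->
  (forall x, U x -> @Sn R m x ->
     (exists2 i, (i < M)%N & (a i)%:~R <= x < (a i + (K i)%:Z)%:~R) \/
     x < ((2 ^ m.-1 + m.-1 ^ 2)%N%:Z)%:~R) ->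
  nu m (rho + delta) U <= (2 `^ rho + C) * cost m rho M a b + C * w ^+ m.
Proof.
move=> r0 d0 C0 hw hpe m6 hJ hU.
have [sp1 sp2] := spill_fit m6.
pose A i := a i + (K i)%:Z.
pose a' i := if (i < M)%N then a i else (2 ^ m.-1)%N%:Z.
pose b' i := if (i < M)%N then (if (A i <= (2 ^ m)%N%:Z)%R then A i else (2 ^ m)%N%:Z)
             else ((2 ^ m.-1 + m.-1 ^ 2)%N)%:Z.
pose Q' i := [set x : R | ((a' i)%:~R <= x) && (x < (b' i)%:~R)].
have hab : forall i, (i <= M)%N -> [/\ ((2 ^ m.-1)%N%:Z <= a' i)%R,
    (a' i < b' i)%R & (b' i <= (2 ^ m)%N%:Z)%R].
  move=> i iM; rewrite /a' /b'; case: ltnP => iM'.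
    have [e1 e2 e3 e4 e5] := hJ i iM'.
    rewrite /A; case: ifP => hA.
      split; lia.
    split; lia.
  split; lia.
have hcov : iscover m U M.+1 a' b' Q'.
  split.
    move=> i iM; have [h1 h2 h3] := hab i iM; split.
      by split; [exact: h2 | right; right; left].
    move=> x /= /andP[x1 x2]; rewrite /Sn -!p2E; apply/andP; split.
      exact: (le_cast_trans x1).
    exact: (lt_cast_trans x2).
  move=> x [Ux Sx]; have := Sx; rewrite /Sn -!p2E /= => /andP[s1 s2].
  case: (hU x Ux Sx) => [[i iM /andP[x1 x2]] | xs].
    exists i; first by rewrite /= ltnW.
    rewrite /Q' /= /a' /b' iM; apply/andP; split => //.
    by case: ifP.
  exists M; first by rewrite /=.
  by rewrite /Q' /= /a' /b' ltnn; apply/andP; split.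
have hrd : 0 <= rho + delta by lra.
have y0 : (0 : R) < 2%:R ^+ m by rewrite exprn_gt0.
apply: (le_trans (nu_le (rho + delta) hcov)).
rewrite /cost big_ord_recr /=; apply: lerD.
  rewrite mulr_sumr; apply: ler_sum => -[i iM] _ /=.
  have [e1 e2 e3 e4 e5] := hJ i iM.
  rewrite /a' /b' iM.
  apply: (@term_bound R rho delta C w) => //.
  - lia.
  - by rewrite /A; case: ifP => hA; lia.
  - by rewrite /A; case: ifP => hA; lia.
  - by rewrite /A; case: ifP => hA; lia.
rewrite /a' /b' ltnn.
have -> : ((2 ^ m.-1 + m.-1 ^ 2)%N%:Z - (2 ^ m.-1)%N%:Z)%R = (m.-1 ^ 2)%N%:Z by lia.
have hx0 : ((m.-1 ^ 2)%N%:Z%:~R / 2%:R^+m : R) \in Num.nneg.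
  by rewrite nnegrE divr_ge0 ?ler0z // ltW.
have hy0 : ((2 * (m%:R)^+2) / 2%:R^+m : R) \in Num.nneg.
  by rewrite nnegrE divr_ge0 // ?mulr_ge0 ?exprn_ge0 // ltW.
have hx : ((m.-1 ^ 2)%N%:Z%:~R / 2%:R^+m : R) <= (2 * (m%:R)^+2) / 2%:R^+m.
  rewrite ler_pM2r ?invr_gt0 //.
  have : ((m.-1 ^ 2)%N%:Z%:~R : R) <= (2 * (m ^ 2)%N%:Z)%:~R.
    rewrite ler_int; have : (m.-1 ^ 2 <= m ^ 2)%N by rewrite leq_exp2r // leq_pred.
    lia.
  by rewrite intrM -natrX.
apply: (le_trans (ge0_ler_powR hrd hx0 hy0 hx)).
apply: (le_trans hpe); rewrite -[X in _ <= X]mulr1 ler_wpM2l ?mulr_ge0 ?exprn_ge0 //.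
  by case/andP: hw.
apply: pow_le1 => //; rewrite invr_ge0 ltW //= invf_le1 // exprn_ege1 // ler1n.
by [].
Qed.

Lemma construct (E : set R) (rho delta : R) : 0 <= rho -> 0 < delta ->
  (\sum_(1 <= n <oo) (nu n rho E)%:E < +oo)%E ->
  exists F : nat -> set (set R),
    (forall n : nat, (1 <= n)%N ->
       (forall Q, F n Q -> exists (a b : int) (k : nat),
            (1 <= k)%N /\ int_interval Q a b /\ b - a = (k * n ^ 2)%:Z) /\
       E `&` Sn n `<=` \bigcup_(Q in F n) Q) /\
    DimH (\bigcup_(n in [set n : nat | (1 <= n)%N]) \bigcup_(Q in F n) Q) <= rho + delta.
Proof.
move=> r0 d0 hs.
have hc : forall n : nat, exists y : nat * (nat -> int) * (nat -> int) * (nat -> set R),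
  (1 <= n)%N -> iscover n E y.1.1.1 y.1.1.2 y.1.2 y.2 /\
     cost n rho y.1.1.1 y.1.1.2 y.1.2 < nu n rho E + 2^-1 ^+ n.
  move=> n; have [n1|n0] := leqP 1 n.
    have e0 : (0:R) < 2^-1 ^+ n by rewrite exprn_gt0 // invr_gt0.
    have [m [a [b [Q [h1 h2]]]]] := nu_approx rho E n1 e0.
    by exists (m, a, b, Q).
  by exists (0%N, fun=> 0, fun=> 0, fun=> set0) => n1; exfalso; lia.
have [f hf] := choice hc.
pose mm n := (f n).1.1.1.
pose aa n := (f n).1.1.2.
pose bb n := (f n).1.2.
pose QQ n := (f n).2.
pose kk n i := (`|bb n i - aa n i|%N %/ n ^ 2).+1.
pose J n i := [set x : R | ((aa n i)%:~R <= x) && (x < (aa n i + ((kk n i * n ^ 2)%N)%:Z)%:~R)].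
pose F n := [set Q : set R | exists2 i, (i < mm n)%N & Q = J n i].
have Jf : forall n i, (1 <= n)%N -> (i < mm n)%N ->
  [/\ ((2 ^ n.-1)%N%:Z <= aa n i)%R, (bb n i <= (2 ^ n)%N%:Z)%R, (aa n i < bb n i)%R,
      (bb n i < aa n i + ((kk n i * n ^ 2)%N)%:Z)%R &
      (aa n i + ((kk n i * n ^ 2)%N)%:Z <= bb n i + (n ^ 2)%N%:Z)%R].
  move=> n i n1 im; have [[hcv _] _] := hf n n1.
  have [h1 h2] := hcv i im; exact: Jfacts n1 h1 h2.
exists F; split.
  move=> n n1; split.
    move=> Q [i im ->].
    exists (aa n i), (aa n i + ((kk n i * n ^ 2)%N)%:Z), (kk n i).
    have kp : (0 < kk n i * n ^ 2)%N by rewrite muln_gt0 expn_gt0 n1.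
    split => //; split; last by lia.
    by split; [lia | right; right; left].
  move=> x [Ex Sx]; have [[_ hcov] _] := hf n n1.
  have [i im Qx] := hcov x (conj Ex Sx).
  exists (J n i); first by exists i.
  have [hii _] := (hf n n1).1.1 i im.
  have [e1 e2 e3 e4 e5] := Jf n i n1 im.
  have [x1 x2] := ii_bounds hii Qx.
  rewrite /J /=; apply/andP; split => //.
  by apply: (le_lt_trans x2); rewrite ltr_int.
have hrd : 0 <= rho + delta by lra.
apply: DimH_le; first exact: hrd.
have [C [w [C0 [/andP[w0 w1] hpe]]]] := poly_exp r0 d0.
set U := \bigcup_(n in _) _.
pose C0' := 2 `^ rho + C.
have C0'0 : 0 <= C0' by rewrite addr_ge0 // powR_ge0.
have q0 : (0:R) <= 2^-1 by rewrite invr_ge0.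
have q1 : (2^-1 : R) < 1 by rewrite invf_lt1 // ltr1n.
apply: (@cmp_fin R (fun m => nu m (rho + delta) U) (fun m => nu m rho E)
  (fun m => (C0' + 64) * 2^-1 ^+ m + C * w ^+ m) C0') => //.
- by move=> n; exact: nu_ge0.
- by move=> n; rewrite addr_ge0 // mulr_ge0 // ?addr_ge0 // exprn_ge0.
- move=> m m1; split; first exact: nu_ge0.
  have hf0 : 0 <= nu m rho E by exact: nu_ge0.
  have hw0 : 0 <= C * w ^+ m by rewrite mulr_ge0 // exprn_ge0.
  have hq0 : 0 <= 2^-1 ^+ m :> R by rewrite exprn_ge0.
  have [m6|m6] := ltnP m 6.
    apply: (le_trans (nu_le1 U m1 hrd)).
    have h64 : 1 <= 64 * 2^-1 ^+ m :> R.
      have hm : (2%:R ^+ m : R) <= 2%:R ^+ 6 by rewrite ler_eXn2l ?ltr1n // ltnW.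
      have e64 : (2%:R ^+ 6 : R) = 64 by rewrite -natrX.
      have y0 : (0:R) < 2%:R ^+ m by rewrite exprn_gt0.
      by rewrite exprVn ler_pdivlMr // mul1r -e64.
    have : 0 <= C0' * nu m rho E + C0' * 2^-1 ^+ m by rewrite addr_ge0 // mulr_ge0.
    rewrite mulrDl; lra.
  have [_ hcost] := hf m m1.
  have hw : 0 <= w <= 1 by rewrite w0 ltW.
  have hU : forall x, U x -> @Sn R m x ->
     (exists2 i, (i < mm m)%N & (aa m i)%:~R <= x < (aa m i + ((kk m i * m ^ 2)%N)%:Z)%:~R) \/
     x < ((2 ^ m.-1 + m.-1 ^ 2)%N%:Z)%:~R.
    move=> x [n n1 [Q [i im ->] /andP[jx1 jx2]]] Sx.
    have := Sx; rewrite /Sn -!p2E /= => /andP[s1 s2].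
    have [e1 e2 e3 e4 e5] := Jf n i n1 im.
    case: (ltngtP n m) => [nm|nm|enm].
    - have [nm1|nm1] := eqVneq n m.-1.
        right; apply: (lt_cast_trans jx2); exact: (arith1 nm1 e2 e5).
      exfalso; apply: (cast_contra s1 jx2).
      exact: (arith2 m6 (arith_lt nm nm1) e2 e5).
    - exfalso; apply: (cast_contra jx1 s2); exact: (arith3 nm e1).
    - left; rewrite -enm; exists i => //; exact/andP.
  have := @cover_level U rho delta C w m (mm m) (aa m) (bb m) (fun i => (kk m i * m ^ 2)%N)
     r0 d0 C0 hw (hpe m) m6 (fun i im => Jf m i m1 im) hU.
  move=> hcl; apply: (le_trans hcl).
  have hcc : C0' * cost m rho (mm m) (aa m) (bb m) <= C0' * (nu m rho E + 2^-1 ^+ m).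
    by rewrite ler_wpM2l // ltW.
  move: hcc; rewrite mulrDr; set c1 := C0' * cost _ _ _ _ _.
  set n1 := C0' * nu m rho E; set n2 := C0' * 2^-1 ^+ m; move=> hcc.
  have : 0 <= 2^-1 ^+ m :> R by [].
  rewrite mulrDl -/n2; lra.
- by apply: geo2_fin; rewrite ?q0 ?q1 ?w0 ?w1 // addr_ge0.
Qed.

End M.

Unset Implicit Arguments.
Theorem lemma6 (R : realType) (E : set R) (hE : E `<=` [set x : R | 0 <= x]) :
  DimH E =
  inf [set d : R | exists F : nat -> set (set R),
         (forall n : nat, (1 <= n)%N ->
            (forall Q, F n Q -> exists (a b : int) (k : nat),
                 (1 <= k)%N /\ int_interval Q a b /\ b - a = (k * n ^ 2)%:Z) /\
            E `&` Sn n `<=` \bigcup_(Q in F n) Q) /\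
         d = DimH (\bigcup_(n in [set n : nat | (1 <= n)%N]) \bigcup_(Q in F n) Q)].
Proof.
set S := [set d : R | _].
have lbS : lbound S (DimH E).
  move=> d [F [hF ->]]; apply: DimH_mono => n n1 x [Ex Sx]; split => //.
  by exists n => //; apply: (hF n n1).2.
have [r0 [r0ge hr0]] := dim_ne E.
have neS : S !=set0.
  have [F [hF _]] := construct r0ge ltr01 hr0.
  by exists (DimH (\bigcup_(n in [set n : nat | (1 <= n)%N]) \bigcup_(Q in F n) Q)), F.
apply: le_anti; apply/andP; split; first exact: lb_le_inf.
apply/ler_addgt0Pr => e e0.
have e20 : 0 < e / 2 by rewrite divr_gt0.
have hlt : DimH E < DimH E + e / 2 by rewrite ltrDl.
have [rho [rho0 hrho] rlt] := @inf_lt R _ _ (dim_ne E) hlt.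
have [F [hF hd]] := construct rho0 e20 hrho.
apply: (@le_trans _ _ (DimH (\bigcup_(n in [set n : nat | (1 <= n)%N]) \bigcup_(Q in F n) Q))).
  by apply: ge_inf; [exists (DimH E) | exists F].
apply: (le_trans hd); move: rlt; rewrite /DimH; lra.
Qed.
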